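(* Let $(\mu,u)$ be a classical structure on $A$ with spiders $\Xi_n^m$ and let $H$ be a complementary endomorphism for it. Then $$(\Xi_3^1\otimes 1_A)\circ(1_A\otimes H\otimes H\otimes 1_A)\circ(1_A\otimes\Xi_1^3)=1_{A\otimes A}.$$
   Context: Setting. $\mathbf C^{pure}$ is a strict symmetric monoidal category with monoidal unit $\mathrm I$, symmetry $\sigma$ and a dagger functor $(-)^\dagger$ (identity on objects, contravariant, involutive, strict monoidal), in which every object $A$ is self-dual: there is $\eta_A:\mathrm I\to A\otimes A$ with $\epsilon_A:=\eta_A^\dagger$, $(\epsilon_A\otimes 1_A)\circ(1_A\otimes\eta_A)=1_A$ and $\sigma_{A,A}\circ\eta_A=\eta_A$. A morphism $U$ is unitary if $U^\dagger\circ U=1$ and $U\circ U^\dagger=1$. Classical structure on $A$: morphisms $\mu:A\otimes A\to A$ and $u:\mathrm I\to A$, with $\delta:=\mu^\dagger$, such that $\mu$ is associative with unit $u$, $\mu\circ\sigma_{A,A}=\mu$, $(1_A\otimes\mu)\circ(\delta\otimes 1_A)=\delta\circ\mu$, $\mu\circ\delta=1_A$, and $\eta_A=\delta\circ u$. Spiders: $\mu_0:=u$, $\mu_1:=1_A$, $\mu_{k+1}:=\mu\circ(\mu_k\otimes 1_A)$, and $\Xi_n^m:=\mu_m^\dagger\circ\mu_n:A^{\otimes n}\to A^{\otimes m}$. Complementary endomorphism: $H:A\to A$ with $(H\otimes 1_A)\circ\eta_A=(1_A\otimes H)\circ\eta_A$, $H^\dagger=H$, $H$ unitary, and $\Xi_2^1\circ(H\otimes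 H)\circ\Xi_1^2=\Xi_0^1\circ\Xi_1^0$. *)

(* Defs.v *)
(* Strictness is expressed
   by equalities of objects; morphism equations that need them use the
   transport [castm] along those equalities. *)

Set Implicit Arguments.

Record SMData := {
  Obj : Type;
  Hom : Obj -> Obj -> Type;
  comp : forall X Y Z : Obj, Hom Y Z -> Hom X Y -> Hom X Z;
  idm : forall X : Obj, Hom X X;
  otens : Obj -> Obj -> Obj;
  munit : Obj;
  mtens : forall X Y Z W : Obj, Hom X Y -> Hom Z W -> Hom (otens X Z) (otens Y W);
  sym : forall X Y : Obj, Hom (otens X Y) (otens Y X);
  dag : forall X Y : Obj, Hom X Y -> Hom Y X;
  eta : forall X : Obj, Hom munit (otens X X)
}.

Arguments Hom {s} _ _.
Arguments comp {s X Y Z} _ _.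
Arguments idm {s} X.
Arguments otens {s} _ _.
Arguments munit {s}.
Arguments mtens {s X Y Z W} _ _.
Arguments sym {s} X Y.
Arguments dag {s X Y} _.
Arguments eta {s} X.

Definition castm {C : SMData} {X Y X' Y' : Obj C} (eX : X = X') (eY : Y = Y')
  (f : Hom X Y) : Hom X' Y' :=
  match eX in _ = X1 return Hom X1 Y' with
  | eq_refl => match eY in _ = Y1 return Hom X Y1 with eq_refl => f end
  end.

Definition eps {C : SMData} (X : Obj C) : Hom (otens X X) munit := dag (eta X).

Record SMAxioms (C : SMData) : Prop := {
  comp_assoc : forall (X Y Z W : Obj C) (h : Hom Z W) (g : Hom Y Z) (f : Hom X Y),
      comp h (comp g f) = comp (comp h g) f;
  comp_id_l : forall (X Y : Obj C) (f : Hom X Y), comp (idm Y) f = f;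
  comp_id_r : forall (X Y : Obj C) (f : Hom X Y), comp f (idm X) = f;
  tens_comp : forall (X1 Y1 Z1 X2 Y2 Z2 : Obj C) (g1 : Hom Y1 Z1) (f1 : Hom X1 Y1)
      (g2 : Hom Y2 Z2) (f2 : Hom X2 Y2),
      mtens (comp g1 f1) (comp g2 f2) = comp (mtens g1 g2) (mtens f1 f2);
  tens_id : forall X Y : Obj C, mtens (idm X) (idm Y) = idm (otens X Y);
  assoc_obj : forall X Y Z : Obj C, otens (otens X Y) Z = otens X (otens Y Z);
  unitl_obj : forall X : Obj C, otens munit X = X;
  unitr_obj : forall X : Obj C, otens X munit = X;
  assoc_mor : forall (X Y Z X' Y' Z' : Obj C) (f : Hom X X') (g : Hom Y Y') (h : Hom Z Z'),
      castm (assoc_obj X Y Z) (assoc_obj X' Y' Z') (mtens (mtens f g) h)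
      = mtens f (mtens g h);
  unitl_mor : forall (X Y : Obj C) (f : Hom X Y),
      castm (unitl_obj X) (unitl_obj Y) (mtens (idm munit) f) = f;
  unitr_mor : forall (X Y : Obj C) (f : Hom X Y),
      castm (unitr_obj X) (unitr_obj Y) (mtens f (idm munit)) = f;
  sym_nat : forall (X Y Z W : Obj C) (f : Hom X Y) (g : Hom Z W),
      comp (sym Y W) (mtens f g) = comp (mtens g f) (sym X Z);
  sym_inv : forall X Y : Obj C, comp (sym Y X) (sym X Y) = idm (otens X Y);
  sym_hex : forall X Y Z : Obj C,
      castm (assoc_obj X Y Z) (eq_sym (assoc_obj Y Z X))
        (comp (mtens (idm Y) (sym X Z))
              (castm eq_refl (assoc_obj Y X Z) (mtens (sym X Y) (idm Z))))
      = sym X (otens Y Z);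
  sym_unit : forall X : Obj C,
      castm (unitr_obj X) (unitl_obj X) (sym X munit) = idm X;
  dag_invol : forall (X Y : Obj C) (f : Hom X Y), dag (dag f) = f;
  dag_comp : forall (X Y Z : Obj C) (g : Hom Y Z) (f : Hom X Y),
      dag (comp g f) = comp (dag f) (dag g);
  dag_id : forall X : Obj C, dag (idm X) = idm X;
  dag_tens : forall (X Y Z W : Obj C) (f : Hom X Y) (g : Hom Z W),
      dag (mtens f g) = mtens (dag f) (dag g);
  dag_sym : forall X Y : Obj C, dag (sym X Y) = sym Y X;
  snake : forall X : Obj C,
      castm (unitr_obj X) (unitl_obj X)
        (comp (mtens (eps X) (idm X))
              (castm eq_refl (eq_sym (assoc_obj X X X)) (mtens (idm X) (eta X))))
      = idm X;
  eta_sym : forall X : Obj C, comp (sym X X) (eta X) = eta X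
}.

Record SMDagCat := { smdata :> SMData; smaxioms : SMAxioms smdata }.

Definition assocO {C : SMDagCat} (X Y Z : Obj C) := assoc_obj (smaxioms C) X Y Z.
Definition unitlO {C : SMDagCat} (X : Obj C) := unitl_obj (smaxioms C) X.
Definition unitrO {C : SMDagCat} (X : Obj C) := unitr_obj (smaxioms C) X.

Definition unitary {C : SMData} {X Y : Obj C} (U : Hom X Y) : Prop :=
  comp (dag U) U = idm X /\ comp U (dag U) = idm Y.

Definition classical {C : SMDagCat} (A : Obj C)
  (mu : Hom (otens A A) A) (u : Hom munit A) : Prop :=
  let delta := dag mu in
  comp mu (mtens mu (idm A))
    = castm (eq_sym (assocO A A A)) eq_refl (comp mu (mtens (idm A) mu)) /\
  comp mu (mtens u (idm A)) = castm (eq_sym (unitlO A)) eq_refl (idm A) /\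
  comp mu (mtens (idm A) u) = castm (eq_sym (unitrO A)) eq_refl (idm A) /\
  comp mu (sym A A) = mu /\
  comp (mtens (idm A) mu) (castm eq_refl (assocO A A A) (mtens delta (idm A)))
    = comp delta mu /\
  comp mu delta = idm A /\
  eta A = comp delta u.

Fixpoint tpow {C : SMData} (A : Obj C) (n : nat) : Obj C :=
  match n with
  | 0 => munit
  | S n' => match n' with 0 => A | S _ => otens (tpow A n') A end
  end.

Fixpoint spider {C : SMData} (A : Obj C) (mu : Hom (otens A A) A) (u : Hom munit A)
  (k : nat) : Hom (tpow A k) A :=
  match k return Hom (tpow A k) A with
  | 0 => u
  | S k' =>
      (match k' as m return Hom (tpow A m) A -> Hom (tpow A (S m)) A with
       | 0 => fun _ => idm A
       | S _ => fun r => comp mu (mtens r (idm A))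
       end) (spider A mu u k')
  end.

Definition Xi {C : SMData} (A : Obj C) (mu : Hom (otens A A) A) (u : Hom munit A)
  (n m : nat) : Hom (tpow A n) (tpow A m) :=
  comp (dag (spider A mu u m)) (spider A mu u n).

Definition complementary {C : SMDagCat} (A : Obj C)
  (mu : Hom (otens A A) A) (u : Hom munit A) (H : Hom A A) : Prop :=
  comp (mtens H (idm A)) (eta A) = comp (mtens (idm A) H) (eta A) /\
  dag H = H /\
  unitary H /\
  comp (Xi A mu u 2 1) (comp (mtens H H) (Xi A mu u 1 2))
    = comp (Xi A mu u 0 1) (Xi A mu u 1 0).

Definition reassoc4 {C : SMDagCat} (A : Obj C) :
  otens A (tpow A 3) = otens (tpow A 3) A :=
  eq_trans (eq_sym (assocO A (otens A A) A))
           (f_equal (fun Z => otens Z A) (eq_sym (assocO A A A))).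

(* Main.v *)
Require Import Defs.
From Stdlib Require Import ProofIrrelevance.

Section Casts.
Variable C : SMData.

Lemma castm_pi (X Y X' Y' : Obj C) (e1 e1' : X = X') (e2 e2' : Y = Y') (f : Hom X Y) :
  castm e1 e2 f = castm e1' e2' f.
Proof. rewrite (proof_irrelevance _ e1 e1'), (proof_irrelevance _ e2 e2'). reflexivity. Qed.

Lemma castm_id_refl (X Y : Obj C) (e1 : X = X) (e2 : Y = Y) (f : Hom X Y) :
  castm e1 e2 f = f.
Proof. rewrite (proof_irrelevance _ e1 eq_refl), (proof_irrelevance _ e2 eq_refl). reflexivity. Qed.

Lemma castm_castm (X Y X1 Y1 X2 Y2 : Obj C) (e3 : X = X1) (e4 : Y = Y1)
  (e1 : X1 = X2) (e2 : Y1 = Y2) (f : Hom X Y) :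
  castm e1 e2 (castm e3 e4 f) = castm (eq_trans e3 e1) (eq_trans e4 e2) f.
Proof. destruct e1, e2, e3, e4. reflexivity. Qed.

Lemma castm_comp' (X Y Z X' Y' Z' : Obj C) (e1 : X = X') (e2 e2' : Y = Y') (e3 : Z = Z')
  (g : Hom Y Z) (f : Hom X Y) :
  comp (castm e2 e3 g) (castm e1 e2' f) = castm e1 e3 (comp g f).
Proof. rewrite (proof_irrelevance _ e2' e2). destruct e1, e2, e3. reflexivity. Qed.

Lemma comp_castl (X Y Y' Z : Obj C) (e : Y = Y') (g : Hom Y Z) (f : Hom X Y') :
  comp (castm e eq_refl g) f = comp g (castm eq_refl (eq_sym e) f).
Proof. destruct e. reflexivity. Qed.

Lemma castm_tens_l (X Y X' Y' Z W : Obj C) (e1 : X = X') (e2 : Y = Y') (f : Hom X Y) (g : Hom Z W) :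
  mtens (castm e1 e2 f) g =
  castm (f_equal (fun T => otens T Z) e1) (f_equal (fun T => otens T W) e2) (mtens f g).
Proof. destruct e1, e2. reflexivity. Qed.

Lemma castm_tens_r (X Y X' Y' Z W : Obj C) (e1 : X = X') (e2 : Y = Y') (f : Hom X Y) (g : Hom Z W) :
  mtens g (castm e1 e2 f) =
  castm (f_equal (fun T => otens Z T) e1) (f_equal (fun T => otens W T) e2) (mtens g f).
Proof. destruct e1, e2. reflexivity. Qed.

Lemma castm_dag (X Y X' Y' : Obj C) (e1 : X = X') (e2 : Y = Y') (f : Hom X Y) :
  dag (castm e1 e2 f) = castm e2 e1 (dag f).
Proof. destruct e1, e2. reflexivity. Qed.

Lemma assoc_inv (ax : SMAxioms C) (X Y Z X' Y' Z' : Obj C) (f : Hom X X') (g : Hom Y Y') (h : Hom Z Z') :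
  mtens (mtens f g) h =
  castm (eq_sym (assoc_obj ax X Y Z)) (eq_sym (assoc_obj ax X' Y' Z')) (mtens f (mtens g h)).
Proof. rewrite <- (assoc_mor ax), castm_castm, castm_id_refl. reflexivity. Qed.

End Casts.

Theorem mainTheorem3 (C : SMDagCat) (A : Obj C)
  (mu : Hom (otens A A) A) (u : Hom munit A) (H : Hom A A)
  (hcl : classical A mu u) (hH : complementary A mu u H) :
  comp (mtens (Xi A mu u 3 1) (idm A))
    (comp (mtens (mtens (mtens (idm A) H) H) (idm A))
          (castm eq_refl (reassoc4 A) (mtens (idm A) (Xi A mu u 1 3))))
  = idm (otens A A).
Proof.
  destruct hcl as [Hassoc [Hul [Hur [Hcomm [Hfrob [Hspec Heta]]]]]].
  destruct hH as [_ [_ [_ Hcompl]]].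
  unfold assocO, unitlO, unitrO in *.
  set (ax := smaxioms C) in *.
  assert (X31 : Xi A mu u 3 1 = comp mu (mtens mu (idm A))).
  { unfold Xi; simpl. rewrite (dag_id ax), (comp_id_l ax), (tens_id ax), (comp_id_r ax). reflexivity. }
  assert (X13 : Xi A mu u 1 3 = comp (mtens (dag mu) (idm A)) (dag mu)).
  { unfold Xi; simpl. rewrite (comp_id_r ax), (tens_id ax), (comp_id_r ax), (dag_comp ax), (dag_tens ax), (dag_id ax). reflexivity. }
  assert (HC : comp mu (comp (mtens H H) (dag mu)) = comp u (dag u)).
  { revert Hcompl. unfold Xi; simpl.
    rewrite !(dag_id ax), !(comp_id_l ax), !(comp_id_r ax), (tens_id ax), (comp_id_r ax). auto. }
  set (P := castm eq_refl (eq_sym (assoc_obj ax A A A)) (mtens (idm A) (dag mu))).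
  assert (S1 : castm eq_refl (reassoc4 A) (mtens (idm A) (comp (mtens (dag mu) (idm A)) (dag mu)))
             = comp (mtens P (idm A)) P).
  { unfold P. rewrite castm_tens_l, (@assoc_inv _ ax), castm_castm.
    rewrite castm_comp'. rewrite <- (tens_comp ax), (comp_id_l ax). apply castm_pi. }
  rewrite X31, X13. cbn [tpow]. cbn [tpow] in S1. rewrite S1.
  rewrite !(comp_assoc ax), <- !(tens_comp ax), !(comp_id_l ax).
  assert (LG : comp (comp (comp mu (mtens mu (idm A))) (mtens (mtens (idm A) H) H)) P
             = castm eq_refl (unitr_obj ax A) (mtens (idm A) (dag u))).
  { rewrite Hassoc, (@assoc_inv _ ax). unfold P.
    rewrite <- (comp_assoc ax), castm_comp', castm_comp', castm_id_refl.
    rewrite <- (tens_comp ax), (comp_id_l ax).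
    rewrite <- (comp_assoc ax), <- (tens_comp ax), (comp_id_l ax).
    assert (TR : mtens (idm A) (comp u (dag u)) = comp (mtens (idm A) u) (mtens (idm A) (dag u))).
    { rewrite <- (tens_comp ax), (comp_id_l ax). reflexivity. }
    rewrite HC, TR, (comp_assoc ax), Hur, comp_castl, (comp_id_l ax).
    apply castm_pi. }
  rewrite LG.
  rewrite castm_tens_l, (@assoc_inv _ ax), castm_castm.
  unfold P. rewrite castm_comp'.
  rewrite <- (tens_comp ax), (comp_id_l ax).
  assert (Hd : comp (mtens (dag u) (idm A)) (dag mu) = castm eq_refl (eq_sym (unitl_obj ax A)) (idm A)).
  { apply (f_equal dag) in Hul. rewrite (dag_comp ax), (dag_tens ax), (dag_id ax), castm_dag, (dag_id ax) in Hul.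
    exact Hul. }
  rewrite Hd, castm_tens_r, castm_castm, (tens_id ax), castm_id_refl. reflexivity.
Qed.
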